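(* If $G$ is a hypo-unique domination graph, then $b(G)\leq \delta(G)+1$.
   Context: All graphs are finite, simple and undirected. A set $D\subseteq V(G)$ is dominating if every vertex of $G$ not in $D$ has a neighbor in $D$; $\gamma(G)$ is the minimum size of a dominating set, and a dominating set of size $\gamma(G)$ is a $\gamma$-set. $G$ is a hypo-unique domination graph if $G$ has at least two $\gamma$-sets but for every $v\in V(G)$ the graph $G-v$ has exactly one $\gamma$-set. The bondage number $b(G)$ of a graph with at least one edge is the minimum number of edges whose removal from $G$ yields a graph with domination number larger than $\gamma(G)$. $\delta(G)$ is the minimum degree. *)

(* Defs.v *)
From mathcomp Require Import all_boot.
Set Implicit Arguments. Unset Strict Implicit. Unset Printing Implicit Defensive.

(* A finite simple graph is given by a vertex set V : {set T} over a finType T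
   and an adjacency relation e, assumed symmetric and irreflexive; only
   adjacencies between vertices of V matter. *)
Definition simple_graph (T : finType) (e : rel T) : Prop :=
  symmetric e /\ irreflexive e.

Section Dom.
Variable T : finType.

Definition dominating (V : {set T}) (e : rel T) (D : {set T}) : bool :=
  (D \subset V) && [forall x in V, (x \in D) || [exists y in D, e x y]].

(* domination number: least size of a dominating set (V itself dominates) *)
Definition gamma (V : {set T}) (e : rel T) : nat :=
  \big[minn/#|V|]_(D : {set T} | dominating V e D) #|D|.

Definition gamma_set (V : {set T}) (e : rel T) (D : {set T}) : bool :=
  dominating V e D && (#|D| == gamma V e).

Definition num_gamma_sets (V : {set T}) (e : rel T) : nat :=
  #|[set D : {set T} | gamma_set V e D]|.

Definition hypo_unique (V : {set T}) (e : rel T) : Prop :=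
  2 <= num_gamma_sets V e /\ forall v, v \in V -> num_gamma_sets (V :\ v) e = 1.

Definition is_edge (V : {set T}) (e : rel T) (s : {set T}) : bool :=
  [exists x in V, exists y in V, e x y && (s == [set x; y])].

Definition edge_set (V : {set T}) (e : rel T) (F : {set {set T}}) : bool :=
  [forall s in F, is_edge V e s].

Definition remove_edges (e : rel T) (F : {set {set T}}) : rel T :=
  fun x y => e x y && ([set x; y] \notin F).

(* bondage number: least number of edges whose removal increases gamma
   (default #|V|^2 when no such set exists; irrelevant when G has an edge
   whose total removal increases gamma) *)
Definition bondage (V : {set T}) (e : rel T) : nat :=
  \big[minn/(#|V| ^ 2)]_(F : {set {set T}} |
      edge_set V e F && (gamma V e < gamma V (remove_edges e F))) #|F|.

Definition degree (V : {set T}) (e : rel T) (v : T) : nat :=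
  #|[set u in V | e v u]|.

Definition min_degree (V : {set T}) (e : rel T) : nat :=
  \big[minn/#|V|]_(v in V) degree V e v.
End Dom.

(* Main.v *)
Require Import Defs.
From mathcomp Require Import all_boot.
Set Implicit Arguments. Unset Strict Implicit. Unset Printing Implicit Defensive.

Section Proofs.
Variable T : finType.
Implicit Types (V D : {set T}) (e : rel T).

Lemma dom_self V e : dominating V e V.
Proof. by rewrite /dominating subxx; apply/forall_inP => x ->. Qed.

Lemma bigmin_le_seq (I : eqType) (s : seq I) (x : nat) (P : pred I) (F : I -> nat) j :
  j \in s -> P j -> \big[minn/x]_(i <- s | P i) F i <= F j.
Proof.
elim: s => [//|a s IH]; rewrite inE big_cons => /orP [/eqP <- -> | Hj Pj].
  exact: geq_minl.
case: (P a); last exact: IH.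
exact: leq_trans (geq_minr _ _) (IH Hj Pj).
Qed.

Lemma bigmin_le (I : finType) (x : nat) (P : pred I) (F : I -> nat) j :
  P j -> \big[minn/x]_(i | P i) F i <= F j.
Proof. by move=> Pj; apply: bigmin_le_seq => //; rewrite mem_index_enum. Qed.

Lemma gamma_le V e D : dominating V e D -> gamma V e <= #|D|.
Proof. by move=> HD; apply: bigmin_le. Qed.

Lemma gamma_gt V e n :
  (forall D, dominating V e D -> n < #|D|) -> n < gamma V e.
Proof.
move=> H; rewrite /gamma; apply: (big_ind (fun m => n < m)).
- exact: H (dom_self V e).
- by move=> a b ha hb; rewrite leq_min ha hb.
- exact: H.
Qed.

Lemma bondage_le V e F :
  edge_set V e F -> gamma V e < gamma V (remove_edges e F) -> bondage V e <= #|F|.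
Proof. by move=> H1 H2; apply: bigmin_le; rewrite /= H1 H2. Qed.

Lemma unique_gamma V e :
  num_gamma_sets V e = 1 ->
  exists D', dominating V e D' /\
    forall D, dominating V e D -> #|D| <= #|D'| -> D = D'.
Proof.
rewrite /num_gamma_sets => /eqP/cards1P [D' HA].
have : D' \in [set D : {set T} | gamma_set V e D] by rewrite HA set11.
rewrite inE => /andP [HD' /eqP Hc].
exists D'; split => // D HD Hle.
have : D \in [set D : {set T} | gamma_set V e D].
  rewrite inE /gamma_set HD eqn_leq gamma_le // andbT -Hc //.
by rewrite HA inE => /eqP.
Qed.

Lemma dom_remove V e (F : {set {set T}}) v D :
  symmetric e -> v \in V -> (forall u, u \in V -> e v u -> [set v; u] \in F) ->
  dominating V (remove_edges e F) D ->
  v \in D /\ dominating (V :\ v) e (D :\ v).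
Proof.
move=> Hs Hv HF /andP [HDV /forall_inP HD].
have HvD : v \in D.
  case/orP: (HD v Hv) => // /exists_inP [y Hy /andP [Hvy]].
  by rewrite HF // (subsetP HDV).
split => //; apply/andP; split.
  by apply/subsetP => x; rewrite !inE => /andP [-> /(subsetP HDV) ->].
apply/forall_inP => u; rewrite inE => /andP [Huv HuV].
case/orP: (HD u HuV) => [HuD|/exists_inP [y Hy /andP [Huy Hn]]].
  by rewrite inE Huv HuD.
apply/orP; right; apply/exists_inP; exists y => //.
rewrite !inE Hy andbT; apply/negP => /eqP Hyv; subst y.
by move: Hn; rewrite setUC HF // Hs.
Qed.

Lemma per_vertex V e v :
  simple_graph e -> hypo_unique V e -> v \in V ->
  bondage V e <= degree V e v + 1.
Proof.
move=> [Hs Hi] [H2 H1] Hv.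
have [D' [HD' Hu]] := unique_gamma (H1 v Hv).
have HD'V : D' \subset V :\ v by case/andP: HD'.
have HvD' : v \notin D' by apply/negP => /(subsetP HD'V); rewrite !inE eqxx.
set N := [set u in V | e v u].
set S := [set [set v; u] | u in N].
have HS : forall u, u \in V -> e v u -> [set v; u] \in S.
  by move=> u Hu0 Hvu; apply/imsetP; exists u; rewrite // inE Hu0 Hvu.
have cS : #|S| <= degree V e v by exact: leq_imset_card.
have eS : edge_set V e S.
  apply/forall_inP => s /imsetP [u]; rewrite inE => /andP [Hu0 Hvu] ->.
  by apply/exists_inP; exists v => //; apply/exists_inP; exists u => //; rewrite Hvu eqxx.
have HD0 : dominating V e (v |: D').
  apply/andP; split.
    apply/subsetP => x /setU1P [-> //|/(subsetP HD'V)].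
    by rewrite inE => /andP [].
  apply/forall_inP => x Hx; case: (x =P v) => [->|/eqP Hxv]; first by rewrite setU11.
  case/andP: HD' => _ /forall_inP /(_ x); rewrite !inE Hxv Hx => /(_ isT).
  case/orP => [Hx'|/exists_inP [y Hy Hxy]]; first by rewrite Hx' !orbT.
  by apply/orP; right; apply/exists_inP; exists y => //; rewrite !inE Hy orbT.
case: (boolP [exists x in D', exists z in V :\ v, e x z]) => [/exists_inP [x Hx /exists_inP [z Hz Hxz]] | Hno].
-
  have [y Hy] : exists y, [&& y \in V :\ v, y \notin D', e x y &
                 [forall w in D', e w y ==> (w == x)]].
    case: (boolP [exists y, [&& y \in V :\ v, y \notin D', e x y &
                 [forall w in D', e w y ==> (w == x)]]]) => [/existsP //|Hne]; exfalso.
    have Hzx : z != x by apply/eqP => Hzx; subst z; rewrite Hi in Hxz.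
    set D1 := z |: (D' :\ x).
    have HD1 : dominating (V :\ v) e D1.
      apply/andP; split.
        apply/subsetP => w /setU1P [-> //|].
        by rewrite inE => /andP [_ /(subsetP HD'V)].
      apply/forall_inP => u Hu1.
      case: (u =P x) => [->|/eqP Hux].
        by apply/orP; right; apply/exists_inP; exists z; rewrite ?setU11.
      case: (boolP (u \in D')) => HuD'.
        by apply/orP; left; apply/setU1r; rewrite !inE Hux HuD'.
      case/andP: HD' => _ /forall_inP /(_ u Hu1).
      rewrite (negbTE HuD') /= => /exists_inP [w Hw Huw].
      apply/orP; right.
      case: (w =P x) => [Hwx|/eqP Hwx]; last first.
        by apply/exists_inP; exists w => //; apply/setU1r; rewrite !inE Hwx Hw.
      subst w.
      case: (boolP [forall w in D', e w u ==> (w == x)]) => Hall.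
        by case/negP: Hne; apply/existsP; exists u; rewrite Hu1 HuD' (Hs x u) Huw Hall.
      move/forall_inPn: Hall => [w' Hw']; rewrite negb_imply => /andP [Hwu Hwx].
      by apply/exists_inP; exists w'; rewrite ?(Hs u w') //; apply/setU1r; rewrite !inE Hwx Hw'.
    have cD1 : #|D1| <= #|D'|.
      by rewrite cardsU1 (cardsD1 x D') Hx /= add1n addnC -addn1 leq_add2l leq_b1.
    have := Hu D1 HD1 cD1; move/setP/(_ x).
    by rewrite !inE eq_sym (negbTE Hzx) eqxx Hx.
  case/and4P: Hy => Hyv HyD Hxy /forall_inP Hpr.
  have HyV : y \in V by move: Hyv; rewrite inE => /andP [].
  have Hx'V : x \in V by move: (subsetP HD'V x Hx); rewrite inE => /andP [].
  set F := [set x; y] |: S.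
  have cF : #|F| <= degree V e v + 1.
    by rewrite cardsU1 addnC; apply: leq_add => //; case: (_ \notin _).
  apply: leq_trans (bondage_le _ _) cF.
    apply/forall_inP => s /setU1P [->|]; last by move/forall_inP: eS; apply.
    by apply/exists_inP; exists x => //; apply/exists_inP; exists y => //; rewrite Hxy eqxx.
  apply: (@leq_trans #|v |: D'|.+1); first by rewrite ltnS gamma_le.
  apply: gamma_gt => D HD.
  have [HvD HDv] := dom_remove Hs Hv (fun u Hu H => setU1r _ (HS u Hu H)) HD.
  rewrite ltnNge; apply/negP => Hle.
  have HDe : D :\ v = D'.
    apply: Hu => //; move: Hle; rewrite cardsU1 HvD' (cardsD1 v D) HvD.
    by rewrite !add1n ltnS.
  have HDD0 : D = v |: D' by rewrite -HDe setD1K.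
  case/andP: HD => _ /forall_inP /(_ y HyV).
  rewrite HDD0 => /orP [/setU1P [Hyv'|HyD']|/exists_inP [w /setU1P [Hw|Hw] /andP [Hyw Hn]]].
  + by move: Hyv; rewrite Hyv' !inE eqxx.
  + by rewrite HyD' in HyD.
  + subst w; move: Hn; rewrite setUC.
    by rewrite (setU1r _ (HS y HyV _)) // Hs.
  + have Hwy : e w y by rewrite Hs.
    have Hwx := eqP (implyP (Hpr w Hw) Hwy).
    by subst w; move: Hn; rewrite setUC setU11.
-
  have HD'eq : D' = V :\ v.
    apply/eqP; rewrite eqEsubset HD'V /=; apply/subsetP => u Hu2.
    case/andP: HD' => _ /forall_inP /(_ u Hu2) /orP [//|/exists_inP [w Hw Hwu]].
    case/negP: Hno; apply/exists_inP; exists w => //; apply/exists_inP; exists u => //.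
    by rewrite Hs.
  have HgV : gamma V e < #|V|.
    rewrite ltn_neqAle gamma_le ?dom_self // andbT.
    apply/negP => /eqP Hg.
    move: H2; rewrite /num_gamma_sets.
    suff : [set D : {set T} | gamma_set V e D] \subset [set V].
      by move/subset_leq_card; rewrite cards1 => Hle Hge; have := leq_trans Hge Hle.
    apply/subsetP => D; rewrite !inE => /andP [/andP [HDV _] /eqP HDc].
    by rewrite eqEcard HDV HDc Hg /=.
  apply: leq_trans (bondage_le eS _) (leq_trans cS (leq_addr _ _)).
  apply: gamma_gt => D HD; apply: (leq_trans HgV).
  have [HvD HDv] := dom_remove Hs Hv HS HD.
  rewrite leqNgt; apply/negP => Hle.
  have HV : #|V| = (#|V :\ v|).+1 by rewrite (cardsD1 v V) Hv.
  have Hle' : #|D :\ v| <= #|D'|.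
    by rewrite HD'eq; move: Hle; rewrite (cardsD1 v D) HvD HV add1n ltnS => /ltnW.
  have Heq := Hu _ HDv Hle'; move: Hle.
  by rewrite (cardsD1 v D) HvD Heq HD'eq HV add1n ltnn.
Qed.

End Proofs.

Theorem theorem3p7 (T : finType) (V : {set T}) (e : rel T) :
  simple_graph e -> hypo_unique V e ->
  bondage V e <= min_degree V e + 1.
Proof.
move=> Hsg Hh.
have [v Hv] : exists v, v \in V.
  case: (set_0Vmem V) => [HV0|[v0 Hv0]]; last by exists v0.
  case: Hh => H2 _; move: H2; rewrite /num_gamma_sets.
  suff : [set D : {set T} | gamma_set V e D] \subset [set set0].
    by move/subset_leq_card; rewrite cards1 => Hle Hge; have := leq_trans Hge Hle.
  apply/subsetP => D; rewrite !inE => /andP [/andP [HDV _] _].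
  by rewrite -subset0 -HV0.
rewrite /min_degree; apply: (big_ind (fun m => bondage V e <= m + 1)).
- apply: leq_trans (per_vertex Hsg Hh Hv) _; rewrite leq_add2r.
  by apply: subset_leq_card; apply/subsetP => u; rewrite inE => /andP [].
- by move=> a b ha hb; rewrite addn_minl leq_min ha hb.
- by move=> u Hu; exact: per_vertex.
Qed.
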